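(* Assume $b_1\ne b_2, c_1=c_2$ or $b_1=b_2, c_1\ne c_2$. 1. If $a_1=a_2$, then both $\check{f}$ and $\widehat{f}$ have no roots. 2. If $a_1\ne a_2$, then either $\check{f}$ or $\widehat{f}$, but not both, has exactly one root $x_0$ at which it changes sign. The corresponding derivative is nonzero at $x_0$.
   Context: A function $f:\mathbb{R}^+\to\mathbb{R}^+$ is called strongly hyperbolic if: (1) $\lim_{x\to 0+} f(x)=+\infty$ and $\lim_{x\to+\infty} f(x)=0$; (2) $f$ is strictly convex; (3) for each $b\in\mathbb{R}$, $\lim_{x\to+\infty} f(x+b)/f(x)=1$; (4) $f$ is differentiable; (5) $\ln|f'(x)|$ is strictly convex. Let $f_1,f_2$ be strongly hyperbolic functions, let $a_1,a_2>0$ and $b_1,b_2,c_1,c_2\in\mathbb{R}$. Define $\check{f}:(\max\{-b_1,-b_2\},+\infty)\to\mathbb{R}$, $\check{f}(x)=a_1f_1(x+b_1)+c_1-a_2f_1(x+b_2)-c_2$, and $\widehat{f}:(-\infty,\min\{-b_1,-b_2\})\to\mathbb{R}$, $\widehat{f}(x)=-a_1f_2(-x-b_1)+c_1+a_2f_2(-x-b_2)-c_2$. *)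

(* Defs.v *)
From Stdlib Require Import Reals Lra.
From Coquelicot Require Import Coquelicot.
Open Scope R_scope.

Definition strictly_convex_on (D : R -> Prop) (f : R -> R) : Prop :=
  forall x y t, D x -> D y -> x <> y -> 0 < t < 1 ->
    f (t * x + (1 - t) * y) < t * f x + (1 - t) * f y.

Definition pos (x : R) : Prop := 0 < x.

(* f : R^+ -> R^+ is modelled as f : R -> R, only its values on (0,+oo) matter. *)
Definition strongly_hyperbolic (f : R -> R) : Prop :=
  (forall x, 0 < x -> 0 < f x) /\
  filterlim f (at_right 0) (Rbar_locally p_infty) /\
  filterlim f (Rbar_locally p_infty) (locally 0) /\
  strictly_convex_on pos f /\
  (forall b : R, filterlim (fun x => f (x + b) / f x) (Rbar_locally p_infty) (locally 1)) /\
  (forall x, 0 < x -> ex_derive f x) /\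
  strictly_convex_on pos (fun x => ln (Rabs (Derive f x))).

Definition fcheck (f1 : R -> R) (a1 a2 b1 b2 c1 c2 : R) (x : R) : R :=
  a1 * f1 (x + b1) + c1 - a2 * f1 (x + b2) - c2.

Definition fhat (f2 : R -> R) (a1 a2 b1 b2 c1 c2 : R) (x : R) : R :=
  - a1 * f2 (- x - b1) + c1 + a2 * f2 (- x - b2) - c2.

Definition check_dom (b1 b2 : R) (x : R) : Prop := Rmax (- b1) (- b2) < x.
Definition hat_dom (b1 b2 : R) (x : R) : Prop := x < Rmin (- b1) (- b2).

Definition no_root (D : R -> Prop) (g : R -> R) : Prop :=
  forall x, D x -> g x <> 0.

Definition changes_sign (g : R -> R) (x0 : R) : Prop :=
  exists eps, 0 < eps /\
    forall x y, x0 - eps < x < x0 -> x0 < y < x0 + eps -> g x * g y < 0.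

Definition unique_signchange_root (D : R -> Prop) (g : R -> R) : Prop :=
  exists x0, D x0 /\ g x0 = 0 /\ (forall x, D x -> g x = 0 -> x = x0) /\
    changes_sign g x0 /\ (exists d, is_derive g x0 d /\ d <> 0).

(* Main.v *)
Require Import Defs.
From Stdlib Require Import Reals Lra.
From Coquelicot Require Import Coquelicot.
Open Scope R_scope.



Lemma der_shift (f : R -> R) (t b l : R) :
  is_derive f (t + b) l -> is_derive (fun x => f (x + b)) t l.
Proof.
  intros H.
  assert (H1 : is_derive (fun x : R => x + b) t 1) by (auto_derive; auto; ring).
  generalize (is_derive_comp f (fun x => x + b) t l 1 H H1).
  unfold scal; simpl; unfold mult; simpl. rewrite Rmult_1_l. auto.
Qed.

Lemma der_refl (f : R -> R) (t b l : R) :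
  is_derive f (- t - b) l -> is_derive (fun x => f (- x - b)) t (- l).
Proof.
  intros H.
  assert (H1 : is_derive (fun x : R => - x - b) t (-1)) by (auto_derive; auto; ring).
  generalize (is_derive_comp f (fun x => - x - b) t l (-1) H H1).
  unfold scal; simpl; unfold mult; simpl. replace (-1 * l) with (- l) by ring. auto.
Qed.

Lemma chord (phi : R -> R) (a b c : R) :
  strictly_convex_on Defs.pos phi -> 0 < a -> a < b -> b < c ->
  phi b * (c - a) < (c - b) * phi a + (b - a) * phi c.
Proof.
  intros Hc Ha Hab Hbc.
  set (t := (c - b) / (c - a)).
  assert (Ht : 0 < t < 1).
  { unfold t; split.
    - apply Rdiv_lt_0_compat; lra.
    - apply (Rmult_lt_reg_r (c - a)); [lra|]. unfold Rdiv. rewrite Rmult_assoc, Rinv_l; lra. }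
  assert (Hb : t * a + (1 - t) * c = b).
  { unfold t. field. lra. }
  generalize (Hc a c t Ha ltac:(unfold Defs.pos; lra) ltac:(lra) Ht). rewrite Hb. intros H.
  apply (Rmult_lt_compat_r (c - a)) in H; [|lra].
  replace ((t * phi a + (1 - t) * phi c) * (c - a)) with ((c - b) * phi a + (b - a) * phi c) in H.
  - lra.
  - unfold t. field. lra.
Qed.

Lemma sh_pos f x : strongly_hyperbolic f -> 0 < x -> 0 < f x.
Proof. intros [H _]. auto. Qed.

Lemma sh_small f eps : strongly_hyperbolic f -> 0 < eps ->
  exists M, forall x, M < x -> f x < eps.
Proof.
  intros (Hp & _ & Hl & _) He.
  rewrite filterlim_locally in Hl.
  destruct (Hl (mkposreal eps He)) as [M HM].
  exists M. intros x Hx. specialize (HM x Hx).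
  change (Rabs (f x - 0) < eps) in HM. apply Rabs_lt_between in HM. lra.
Qed.

Lemma sh_big f K : strongly_hyperbolic f ->
  exists e, 0 < e /\ forall x, 0 < x < e -> K < f x.
Proof.
  intros (Hp & Hl & _).
  specialize (Hl (fun y => K < y) ltac:(exists K; auto)).
  destruct Hl as [e He]. exists e. split; [apply cond_pos|].
  intros x Hx. apply He; [|lra].
  change (Rabs (x - 0) < e). rewrite Rabs_right; lra.
Qed.

Lemma sh_decr f x y : strongly_hyperbolic f -> 0 < x -> x < y -> f y < f x.
Proof.
  intros Hf Hx Hxy.
  destruct (Rlt_or_le (f y) (f x)) as [H|H]; [auto|exfalso].
  assert (Hy := sh_pos f y Hf ltac:(lra)).
  destruct (sh_small f (f y) Hf Hy) as [M HM].
  set (z := Rmax M y + 1).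
  assert (Hz1 : M < z) by (unfold z; generalize (Rmax_l M y); lra).
  assert (Hz2 : y < z) by (unfold z; generalize (Rmax_r M y); lra).
  specialize (HM z Hz1).
  destruct Hf as (_ & _ & _ & Hc & _).
  generalize (chord f x y z Hc Hx Hxy Hz2). intros Hch.
  assert ((z - y) * f x <= (z - y) * f y) by (apply Rmult_le_compat_l; lra).
  assert ((y - x) * f z < (y - x) * f y) by (apply Rmult_lt_compat_l; lra).
  nra.
Qed.

Lemma sh_der f x : strongly_hyperbolic f -> 0 < x -> is_derive f x (Derive f x).
Proof.
  intros (_ & _ & _ & _ & _ & Hd & _) Hx. apply Derive_correct. auto.
Qed.

Lemma sh_cont f x : strongly_hyperbolic f -> 0 < x -> continuity_pt f x.
Proof.
  intros Hf Hx. apply continuity_pt_filterlim. apply (ex_derive_continuous (K := R_AbsRing) (V := R_NormedModule)).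
  exists (Derive f x). apply sh_der; auto.
Qed.

Lemma der_le f x l K : is_derive f x l ->
  (exists del, 0 < del /\ forall h, 0 < h < del -> (f (x + h) - f x) / h <= K) -> l <= K.
Proof.
  intros Hd [del [Hdel Hb]].
  apply is_derive_Reals in Hd.
  destruct (Rle_or_lt l K) as [H|H]; [auto|exfalso].
  destruct (Hd (l - K) ltac:(lra)) as [dl Hdl].
  set (h := Rmin (del/2) (dl/2)).
  assert (Hh1 : 0 < h) by (unfold h; apply Rmin_pos; generalize (cond_pos dl); lra).
  assert (Hh2 : h < del) by (unfold h; generalize (Rmin_l (del/2) (dl/2)); lra).
  assert (Hh3 : h < dl) by (unfold h; generalize (Rmin_r (del/2) (dl/2)) (cond_pos dl); lra).
  specialize (Hdl h ltac:(lra) ltac:(rewrite Rabs_right; lra)).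
  specialize (Hb h ltac:(lra)).
  apply Rabs_lt_between in Hdl. lra.
Qed.

Lemma sh_dneg f x : strongly_hyperbolic f -> 0 < x -> Derive f x < 0.
Proof.
  intros Hf Hx.
  assert (Hs : f (x + 1) - f x < 0) by (generalize (sh_decr f x (x+1) Hf Hx ltac:(lra)); lra).
  apply Rle_lt_trans with (f (x + 1) - f x); auto.
  apply der_le with (f := f) (x := x); [apply sh_der; auto|].
  exists 1. split; [lra|]. intros h Hh.
  destruct Hf as (_ & _ & _ & Hc & _).
  generalize (chord f x (x + h) (x + 1) Hc Hx ltac:(lra) ltac:(lra)).
  intros Hch.
  apply (Rmult_le_reg_r h); [lra|]. unfold Rdiv. rewrite Rmult_assoc, Rinv_l; [|lra].
  replace (x + 1 - x) with 1 in Hch by ring. replace (x + 1 - (x + h)) with (1 - h) in Hch by ring.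
  replace (x + h - x) with h in Hch by ring. nra.
Qed.

Lemma sh_hmono f x y d : strongly_hyperbolic f -> 0 < x -> x < y -> 0 < d ->
  (- Derive f (x + d)) * (- Derive f y) < (- Derive f (y + d)) * (- Derive f x).
Proof.
  intros Hf Hx Hxy Hd.
  set (L := fun t => ln (Rabs (Derive f t))).
  assert (Hc : strictly_convex_on Defs.pos L) by (destruct Hf as (_&_&_&_&_&_&H); exact H).
  assert (HL : forall t, 0 < t -> L t = ln (- Derive f t)).
  { intros t Ht. unfold L. rewrite Rabs_left; auto. apply sh_dneg; auto. }
  assert (Hg : forall t, 0 < t -> 0 < - Derive f t).
  { intros t Ht. generalize (sh_dneg f t Hf Ht). lra. }
  generalize (chord L x (x + d) (y + d) Hc Hx ltac:(lra) ltac:(lra)).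
  generalize (chord L x y (y + d) Hc Hx ltac:(lra) ltac:(lra)).
  intros H1 H2.
  assert (H3 : L (x + d) + L y < L x + L (y + d)).
  { apply (Rmult_lt_reg_r (y + d - x)); [lra|]. nra. }
  rewrite !HL in H3 by lra.
  apply ln_lt_inv.
  - apply Rmult_lt_0_compat; apply Hg; lra.
  - apply Rmult_lt_0_compat; apply Hg; lra.
  - rewrite !ln_mult by (apply Hg; lra). lra.
Qed.

Lemma sh_mvt f x M d : strongly_hyperbolic f -> 0 < x -> x < M -> 0 < d ->
  exists c, x <= c <= M /\
    Derive f (c + d) * (f x - f M) = Derive f c * (f (x + d) - f (M + d)).
Proof.
  intros Hf Hx HxM Hd.
  set (A := f (x + d) - f (M + d)). set (B := f x - f M).
  set (phi := fun t => B * f (t + d) - A * f t).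
  set (dphi := fun t => B * Derive f (t + d) - A * Derive f t).
  destruct (MVT_gen phi x M dphi) as [c [Hc Heq]].
  - rewrite Rmin_left, Rmax_right by lra. intros t Ht.
    assert (H1 := is_derive_scal _ _ B _ (der_shift f t d _ (sh_der f (t + d) Hf ltac:(lra)))).
    assert (H2 := is_derive_scal _ _ A _ (sh_der f t Hf ltac:(lra))).
    generalize (is_derive_minus _ _ _ _ _ H1 H2).
    unfold phi, dphi, minus, plus, opp; simpl. auto.
  - rewrite Rmin_left, Rmax_right by lra. intros t Ht.
    unfold phi. apply continuity_pt_minus; apply continuity_pt_scal.
    + apply continuity_pt_comp with (f1 := fun t => t + d).
      * apply derivable_continuous_pt. reg.
      * apply sh_cont; auto; lra.
    + apply sh_cont; auto; lra.
  - rewrite Rmin_left, Rmax_right in Hc by lra.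
    exists c. split; auto.
    assert (E : phi M - phi x = 0) by (unfold phi, A, B; ring).
    rewrite E in Heq. unfold dphi in Heq.
    assert (B * Derive f (c + d) - A * Derive f c = 0).
    { symmetry in Heq. apply Rmult_integral in Heq. destruct Heq; [|lra]. lra. }
    unfold A, B in *. lra.
Qed.

Lemma sh_step1 f x M d : strongly_hyperbolic f -> 0 < x -> x < M -> 0 < d ->
  (- Derive f (x + d)) * (f x - f M) <= (f (x + d) - f (M + d)) * (- Derive f x).
Proof.
  intros Hf Hx HxM Hd.
  destruct (sh_mvt f x M d Hf Hx HxM Hd) as [c [Hc Heq]].
  assert (Hg : forall t, 0 < t -> 0 < - Derive f t).
  { intros t Ht. generalize (sh_dneg f t Hf Ht). lra. }
  assert (Hm : (- Derive f (x + d)) * (- Derive f c) <= (- Derive f (c + d)) * (- Derive f x)).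
  { destruct (Req_dec x c) as [E|E].
    - subst c. lra.
    - left. apply sh_hmono; auto; lra. }
  assert (Hgc := Hg c ltac:(lra)).
  set (gc := - Derive f c) in *. set (gcd := - Derive f (c + d)) in *.
  set (gx := - Derive f x) in *. set (gxd := - Derive f (x + d)) in *.
  set (A := f (x + d) - f (M + d)) in *. set (B := f x - f M) in *.
  assert (HB : 0 < B) by (unfold B; generalize (sh_decr f x M Hf Hx HxM); lra).
  assert (Heq' : gcd * B = gc * A) by (unfold gcd, gc; lra).
  apply (Rmult_le_reg_l gc); auto.
  assert (gc * (A * gx) = gcd * B * gx) by (rewrite Heq'; ring).
  nra.
Qed.

Lemma sh_W f x d : strongly_hyperbolic f -> 0 < x -> 0 < d ->
  (- Derive f (x + d)) * f x <= f (x + d) * (- Derive f x).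
Proof.
  intros Hf Hx Hd.
  assert (Hg : forall t, 0 < t -> 0 < - Derive f t).
  { intros t Ht. generalize (sh_dneg f t Hf Ht). lra. }
  destruct (Rle_or_lt ((- Derive f (x + d)) * f x) (f (x + d) * (- Derive f x))) as [H|H]; [auto|exfalso].
  set (gap := (- Derive f (x + d)) * f x - f (x + d) * (- Derive f x)).
  assert (Hgxd := Hg (x + d) ltac:(lra)).
  destruct (sh_small f (gap / (- Derive f (x + d))) Hf) as [M0 HM0].
  { apply Rdiv_lt_0_compat; unfold gap; lra. }
  set (M := Rmax M0 x + 1).
  assert (HM1 : M0 < M) by (unfold M; generalize (Rmax_l M0 x); lra).
  assert (HM2 : x < M) by (unfold M; generalize (Rmax_r M0 x); lra).
  specialize (HM0 M HM1).
  generalize (sh_step1 f x M d Hf Hx HM2 Hd). intros Hs.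
  assert (HfMd := sh_pos f (M + d) Hf ltac:(lra)).
  assert (Hgx := Hg x Hx).
  assert (Hfm : (- Derive f (x + d)) * f M < gap).
  { apply (Rmult_lt_compat_l (- Derive f (x + d))) in HM0; auto.
    unfold Rdiv in HM0. rewrite <- Rmult_assoc, (Rmult_comm _ gap), Rmult_assoc, Rinv_r in HM0 by lra.
    lra. }
  unfold gap in Hfm. nra.
Qed.

Lemma sh_S f x d : strongly_hyperbolic f -> 0 < x -> 0 < d ->
  (- Derive f (x + d)) * f x < f (x + d) * (- Derive f x).
Proof.
  intros Hf Hx Hd.
  assert (Hg : forall t, 0 < t -> 0 < - Derive f t).
  { intros t Ht. generalize (sh_dneg f t Hf Ht). lra. }
  generalize (sh_step1 f x (x + 1) d Hf Hx ltac:(lra) Hd). intros H1.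
  generalize (sh_W f (x + 1) d Hf ltac:(lra) Hd). intros H2.
  generalize (sh_hmono f x (x + 1) d Hf Hx ltac:(lra) Hd). intros H3.
  replace (x + 1 + d) with (x + d + 1) in * by ring.
  assert (Hf1 := sh_pos f (x + 1) Hf ltac:(lra)).
  assert (Hg1 := Hg (x + 1) ltac:(lra)).
  assert (Hg0 := Hg x Hx).
  set (g0 := - Derive f x) in *. set (g1 := - Derive f (x + 1)) in *.
  set (gd := - Derive f (x + d)) in *. set (g1d := - Derive f (x + d + 1)) in *.
  set (F1 := f (x + 1)) in *. set (Fd1 := f (x + d + 1)) in *.
  assert (K : gd * F1 < Fd1 * g0).
  { apply (Rmult_lt_reg_l g1); auto.
    assert (g1 * (Fd1 * g0) >= g0 * (g1d * F1)) by nra.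
    nra. }
  lra.
Qed.

Definition SP (D : R -> Prop) (g : R -> R) : Prop :=
  exists x0, D x0 /\ g x0 = 0 /\
  (exists eps, 0 < eps /\ forall x, x0 - eps < x < x0 + eps -> D x) /\
  (((forall x, D x -> x < x0 -> 0 < g x) /\ (forall x, D x -> x0 < x -> g x < 0)) \/
   ((forall x, D x -> x < x0 -> g x < 0) /\ (forall x, D x -> x0 < x -> 0 < g x))) /\
  (exists d, is_derive g x0 d /\ d <> 0).

Lemma SP_usr D g : SP D g -> unique_signchange_root D g.
Proof.
  intros (x0 & HD & H0 & (eps & He & Hn) & Hs & Hd).
  exists x0. split; [auto|]. split; [auto|]. split; [|split; [|auto]].
  - intros x Hx Hgx. destruct (Rtotal_order x x0) as [H|[H|H]]; auto;
      destruct Hs as [[Hl Hr]|[Hl Hr]];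
      [specialize (Hl x Hx H)|specialize (Hl x Hx H)|specialize (Hr x Hx H)|specialize (Hr x Hx H)]; lra.
  - exists eps. split; auto. intros x y Hx Hy.
    assert (Dx : D x) by (apply Hn; lra). assert (Dy : D y) by (apply Hn; lra).
    destruct Hs as [[Hl Hr]|[Hl Hr]].
    + specialize (Hl x Dx ltac:(lra)). specialize (Hr y Dy ltac:(lra)). nra.
    + specialize (Hl x Dx ltac:(lra)). specialize (Hr y Dy ltac:(lra)). nra.
Qed.

Lemma SP_neg D g : SP D g -> SP D (fun x => - g x).
Proof.
  intros (x0 & HD & H0 & Hn & Hs & (d & Hd & Hd0)).
  exists x0. split; [auto|]. split; [rewrite H0; ring|]. split; [auto|]. split.
  - destruct Hs as [[Hl Hr]|[Hl Hr]]; [right|left]; split; intros x Hx Hxx;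
      [specialize (Hl x Hx Hxx)|specialize (Hr x Hx Hxx)|specialize (Hl x Hx Hxx)|specialize (Hr x Hx Hxx)]; lra.
  - exists (- d). split; [|lra]. apply (is_derive_opp g x0 d). auto.
Qed.

Lemma loc_of (f g : R -> R) (x0 eps : R) (D : R -> Prop) : 0 < eps -> (forall x, x0 - eps < x < x0 + eps -> D x) ->
  (forall x, D x -> f x = g x) -> locally x0 (fun t => f t = g t).
Proof.
  intros He Hn Heq. exists (mkposreal eps He). intros y Hy.
  change (Rabs (y - x0) < eps) in Hy. apply Rabs_lt_between in Hy.
  apply Heq, Hn. lra.
Qed.

Lemma SP_shift G b D g : SP Defs.pos G -> (forall x, D x <-> 0 < x + b) ->
  (forall x, D x -> g x = G (x + b)) -> SP D g.
Proof.
  intros (u0 & HD & H0 & (eps & He & Hn) & Hs & (d & Hd & Hd0)) HDe Hg.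
  unfold Defs.pos in *.
  assert (Dx0 : D (u0 - b)) by (apply HDe; lra).
  assert (Hn' : forall x, u0 - b - eps < x < u0 - b + eps -> D x).
  { intros x Hx. apply HDe. specialize (Hn (x + b) ltac:(lra)). auto. }
  exists (u0 - b). split; [auto|]. split.
  { rewrite Hg by auto. replace (u0 - b + b) with u0 by ring. auto. }
  split; [exists eps; split; auto|]. split.
  - destruct Hs as [[Hl Hr]|[Hl Hr]]; [left|right]; split; intros x Hx Hxx; rewrite Hg by auto;
      [apply Hl|apply Hr|apply Hl|apply Hr]; try (apply HDe; auto); lra.
  - exists d. split; auto.
    apply is_derive_ext_loc with (f := fun x => G (x + b)).
    + apply loc_of with (eps := eps) (D := D); auto. intros x Hx. symmetry. auto.
    + apply der_shift. replace (u0 - b + b) with u0 by ring. auto.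
Qed.

Lemma SP_refl G b D g : SP Defs.pos G -> (forall x, D x <-> 0 < - x - b) ->
  (forall x, D x -> g x = G (- x - b)) -> SP D g.
Proof.
  intros (u0 & HD & H0 & (eps & He & Hn) & Hs & (d & Hd & Hd0)) HDe Hg.
  unfold Defs.pos in *.
  assert (Dx0 : D (- u0 - b)) by (apply HDe; lra).
  assert (Hn' : forall x, - u0 - b - eps < x < - u0 - b + eps -> D x).
  { intros x Hx. apply HDe. specialize (Hn (- x - b) ltac:(lra)). auto. }
  exists (- u0 - b). split; [auto|]. split.
  { rewrite Hg by auto. replace (- (- u0 - b) - b) with u0 by ring. auto. }
  split; [exists eps; split; auto|]. split.
  - destruct Hs as [[Hl Hr]|[Hl Hr]]; [right|left]; split; intros x Hx Hxx; rewrite Hg by auto;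
      [apply Hr|apply Hl|apply Hr|apply Hl]; try (apply HDe; auto); lra.
  - exists (- d). split; [|lra].
    apply is_derive_ext_loc with (f := fun x => G (- x - b)).
    + apply loc_of with (eps := eps) (D := D); auto. intros x Hx. symmetry. auto.
    + apply der_refl. replace (- (- u0 - b) - b) with u0 by ring. auto.
Qed.

Lemma NR_comp G phi s D g : no_root Defs.pos G -> s <> 0 -> (forall x, D x -> 0 < phi x) ->
  (forall x, D x -> g x = s * G (phi x)) -> no_root D g.
Proof.
  intros HG Hs Hphi Hg x Hx. rewrite Hg by auto.
  intros E. apply Rmult_integral in E. destruct E as [E|E]; [auto|].
  apply (HG (phi x)); auto. apply Hphi; auto.
Qed.

Lemma sh_rmono f u v d : strongly_hyperbolic f -> 0 < u -> u < v -> 0 < d ->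
  f (u + d) * f v < f (v + d) * f u.
Proof.
  intros Hf Hu Huv Hd.
  set (r := fun t => f (t + d) / f t).
  set (dr := fun t => (Derive f (t + d) * f t - f (t + d) * Derive f t) / f t ^ 2).
  destruct (MVT_gen r u v dr) as [c [Hc Heq]].
  - rewrite Rmin_left, Rmax_right by lra. intros t Ht.
    assert (Hft := sh_pos f t Hf ltac:(lra)).
    apply (is_derive_div (fun t => f (t + d)) f t).
    + apply der_shift, sh_der; auto; lra.
    + apply sh_der; auto; lra.
    + lra.
  - rewrite Rmin_left, Rmax_right by lra. intros t Ht.
    unfold r. apply continuity_pt_div.
    + apply continuity_pt_comp with (f1 := fun t => t + d).
      * apply derivable_continuous_pt. reg.
      * apply sh_cont; auto; lra.
    + apply sh_cont; auto; lra.
    + generalize (sh_pos f t Hf ltac:(lra)). lra.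
  - rewrite Rmin_left, Rmax_right in Hc by lra.
    assert (Hfc := sh_pos f c Hf ltac:(lra)).
    assert (Hpos : 0 < dr c).
    { unfold dr. apply Rdiv_lt_0_compat; [|apply pow_lt; auto].
      generalize (sh_S f c d Hf ltac:(lra) Hd). lra. }
    assert (Hr : r u < r v) by nra.
    unfold r in Hr.
    assert (Hfu := sh_pos f u Hf ltac:(lra)). assert (Hfv := sh_pos f v Hf ltac:(lra)).
    apply (Rmult_lt_compat_r (f u * f v)) in Hr; [|nra].
    replace (f (u + d) / f u * (f u * f v)) with (f (u + d) * f v) in Hr by (field; lra).
    replace (f (v + d) / f v * (f u * f v)) with (f (v + d) * f u) in Hr by (field; lra).
    auto.
Qed.

Lemma core_K f al be d : strongly_hyperbolic f -> 0 < al -> al < be -> 0 < d ->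
  SP Defs.pos (fun u => al * f u - be * f (u + d)).
Proof.
  intros Hf Hal Hab Hd.
  assert (Hfd := sh_pos f d Hf Hd).
  destruct (sh_big f (be * f d / al) Hf) as [e [He Hbig]].
  set (u1 := e / 2).
  assert (Hu1 : 0 < u1) by (unfold u1; lra).
  assert (K1 : be * f (u1 + d) < al * f u1).
  { specialize (Hbig u1 ltac:(unfold u1; lra)).
    apply (Rmult_lt_compat_l al) in Hbig; auto.
    replace (al * (be * f d / al)) with (be * f d) in Hbig by (field; lra).
    generalize (sh_decr f d (u1 + d) Hf Hd ltac:(lra)). intros. nra. }
  destruct Hf as (Hp & Hl0 & Hlinf & Hc & H3 & Hdx & H5) eqn:Hfe.
  generalize (H3 d). intros H3d. rewrite filterlim_locally in H3d.
  destruct (H3d (mkposreal (1 - al / be) ltac:(apply Rlt_0_minus; apply (Rmult_lt_reg_r be); [lra|]; unfold Rdiv; rewrite Rmult_assoc, Rinv_l; lra))) as [M HM].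
  set (u2 := Rmax M u1 + 1).
  assert (Hu21 : M < u2) by (unfold u2; generalize (Rmax_l M u1); lra).
  assert (Hu22 : u1 < u2) by (unfold u2; generalize (Rmax_r M u1); lra).
  assert (K2 : al * f u2 < be * f (u2 + d)).
  { specialize (HM u2 Hu21). change (Rabs (f (u2 + d) / f u2 - 1) < 1 - al / be) in HM.
    apply Rabs_lt_between in HM.
    assert (Hfu2 := sh_pos f u2 Hf ltac:(lra)).
    assert (al / be < f (u2 + d) / f u2) by lra.
    apply (Rmult_lt_compat_r (be * f u2)) in H; [|nra].
    replace (al / be * (be * f u2)) with (al * f u2) in H by (field; lra).
    replace (f (u2 + d) / f u2 * (be * f u2)) with (be * f (u2 + d)) in H by (field; lra).
    auto. }
  destruct (Ranalysis5.IVT_interv (fun u => be * f (u + d) - al * f u) u1 u2) as [u0 [Hu0 Hr0]].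
  { intros a Ha. apply continuity_pt_minus; apply continuity_pt_scal.
    - apply continuity_pt_comp with (f1 := fun t => t + d).
      * apply derivable_continuous_pt. reg.
      * apply sh_cont; auto; lra.
    - apply sh_cont; auto; lra. }
  { auto. } { simpl; lra. } { simpl; lra. }
  simpl in Hr0.
  assert (Hfu0 := sh_pos f u0 Hf ltac:(lra)).
  exists u0. split; [unfold Defs.pos; lra|]. split; [lra|]. split.
  { exists u0. split; [lra|]. intros x Hx. unfold Defs.pos. lra. }
  split.
  - left. split; intros x Hx Hxx; unfold Defs.pos in Hx; assert (Hfx := sh_pos f x Hf Hx).
    + generalize (sh_rmono f x u0 d Hf Hx Hxx Hd). intros Hm.
      assert (be * f (x + d) * f u0 < al * f x * f u0).
      { replace (al * f x * f u0) with (f x * (al * f u0)) by ring.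
        replace (al * f u0) with (be * f (u0 + d)) by lra. nra. }
      apply Rmult_lt_reg_r in H; auto. lra.
    + generalize (sh_rmono f u0 x d Hf ltac:(lra) Hxx Hd). intros Hm.
      assert (al * f x * f u0 < be * f (x + d) * f u0).
      { replace (al * f x * f u0) with (f x * (al * f u0)) by ring.
        replace (al * f u0) with (be * f (u0 + d)) by lra. nra. }
      apply Rmult_lt_reg_r in H; auto. lra.
  - exists (al * Derive f u0 - be * Derive f (u0 + d)). split.
    + assert (H1 := is_derive_scal _ _ al _ (sh_der f u0 Hf ltac:(lra))).
      assert (H2 := is_derive_scal _ _ be _ (der_shift f u0 d _ (sh_der f (u0 + d) Hf ltac:(lra)))).
      generalize (is_derive_minus _ _ _ _ _ H1 H2).
      unfold minus, plus, opp; simpl. auto.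
    + intros E.
      generalize (sh_S f u0 d Hf ltac:(lra) Hd). intros HS.
      apply (Rmult_lt_compat_r (al * be)) in HS; [|nra].
      assert (al * f u0 * (- Derive f (u0 + d)) * be < be * f (u0 + d) * (- Derive f u0) * al).
      { replace (al * f u0 * (- Derive f (u0 + d)) * be) with ((- Derive f (u0 + d)) * f u0 * (al * be)) by ring.
        replace (be * f (u0 + d) * (- Derive f u0) * al) with (f (u0 + d) * (- Derive f u0) * (al * be)) by ring.
        auto. }
      assert (E1 : al * f u0 = be * f (u0 + d)) by lra.
      assert (E2 : al * Derive f u0 = be * Derive f (u0 + d)) by lra.
      assert (al * f u0 * (- Derive f (u0 + d)) * be = be * f (u0 + d) * (- Derive f u0) * al).
      { replace (al * f u0 * (- Derive f (u0 + d)) * be) with (- (al * f u0) * (be * Derive f (u0 + d))) by ring.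
        replace (be * f (u0 + d) * (- Derive f u0) * al) with (- (be * f (u0 + d)) * (al * Derive f u0)) by ring.
        rewrite E1, E2. ring. }
      lra.
Qed.

Lemma core_K_nr f al be d : strongly_hyperbolic f -> 0 < be -> be <= al -> 0 < d ->
  no_root Defs.pos (fun u => al * f u - be * f (u + d)).
Proof.
  intros Hf Hb Hab Hd u Hu. unfold Defs.pos in Hu.
  generalize (sh_decr f u (u + d) Hf Hu ltac:(lra)) (sh_pos f u Hf Hu) (sh_pos f (u+d) Hf ltac:(lra)).
  intros. nra.
Qed.

Lemma core_L f k m : strongly_hyperbolic f -> k * m < 0 ->
  SP Defs.pos (fun u => k * f u + m).
Proof.
  intros Hf Hkm.
  assert (Hk : k <> 0) by (intro; subst; lra).
  set (v := - m / k).
  assert (Hkv : k * v = - m) by (unfold v; field; auto).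
  assert (Hv : 0 < v).
  { destruct (Rlt_or_le 0 k) as [H|H].
    - apply (Rmult_lt_reg_l k); auto. nra.
    - assert (k < 0) by lra. apply (Rmult_lt_reg_l (- k)); [lra|]. nra. }
  destruct (sh_big f v Hf) as [e [He Hbig]].
  set (u1 := e / 2).
  assert (Hu1 : 0 < u1) by (unfold u1; lra).
  specialize (Hbig u1 ltac:(unfold u1; lra)).
  destruct (sh_small f v Hf Hv) as [M HM].
  set (u2 := Rmax M u1 + 1).
  assert (Hu21 : M < u2) by (unfold u2; generalize (Rmax_l M u1); lra).
  assert (Hu22 : u1 < u2) by (unfold u2; generalize (Rmax_r M u1); lra).
  specialize (HM u2 Hu21).
  destruct (Ranalysis5.IVT_interv (fun u => v - f u) u1 u2) as [u0 [Hu0 Hr0]].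
  { intros a Ha. apply continuity_pt_minus; [apply continuity_pt_const; intros ? ?; auto|].
    apply sh_cont; auto; lra. }
  { auto. } { simpl; lra. } { simpl; lra. }
  simpl in Hr0.
  assert (Hfu0 : f u0 = v) by lra.
  exists u0. split; [unfold Defs.pos; lra|]. split; [rewrite Hfu0; lra|]. split.
  { exists u0. split; [lra|]. intros x Hx. unfold Defs.pos. lra. }
  split.
  - destruct (Rlt_or_le 0 k) as [Hk0|Hk0]; [left|right]; split; intros x Hx Hxx; unfold Defs.pos in Hx.
    + generalize (sh_decr f x u0 Hf Hx Hxx). intros. nra.
    + generalize (sh_decr f u0 x Hf ltac:(lra) Hxx). intros. nra.
    + generalize (sh_decr f x u0 Hf Hx Hxx). intros. assert (k < 0) by lra. nra.
    + generalize (sh_decr f u0 x Hf ltac:(lra) Hxx). intros. assert (k < 0) by lra. nra.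
  - exists (k * Derive f u0). split.
    + assert (H1 := is_derive_scal _ _ k _ (sh_der f u0 Hf ltac:(lra))).
      assert (H2 := is_derive_const (K := R_AbsRing) m u0).
      generalize (is_derive_plus _ _ _ _ _ H1 H2).
      unfold plus, zero; simpl. rewrite Rplus_0_r. auto.
    + generalize (sh_dneg f u0 Hf ltac:(lra)). intros Hn E.
      apply Rmult_integral in E. destruct E; [auto|lra].
Qed.

Lemma core_L_nr f k m : strongly_hyperbolic f -> 0 <= k * m -> m <> 0 ->
  no_root Defs.pos (fun u => k * f u + m).
Proof.
  intros Hf Hkm Hm u Hu E. unfold Defs.pos in Hu.
  generalize (sh_pos f u Hf Hu). intros Hfu.
  assert (Hm2 : 0 < m * m) by (destruct (Rlt_or_le 0 m); nra).
  assert ((k * f u + m) * m = k * m * f u + m * m) by ring.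
  rewrite E in H. nra.
Qed.

Lemma dom_lt b1 b2 : b1 < b2 ->
  (forall x, check_dom b1 b2 x <-> 0 < x + b1) /\ (forall x, hat_dom b1 b2 x <-> 0 < - x - b2).
Proof.
  intros H. unfold check_dom, hat_dom, Rmax, Rmin.
  split; intros x; destruct (Rle_dec _ _); split; intros; lra.
Qed.

Lemma dom_gt b1 b2 : b2 < b1 ->
  (forall x, check_dom b1 b2 x <-> 0 < x + b2) /\ (forall x, hat_dom b1 b2 x <-> 0 < - x - b1).
Proof.
  intros H. unfold check_dom, hat_dom, Rmax, Rmin.
  split; intros x; destruct (Rle_dec _ _); split; intros; lra.
Qed.

Lemma dom_eq b :
  (forall x, check_dom b b x <-> 0 < x + b) /\ (forall x, hat_dom b b x <-> 0 < - x - b).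
Proof.
  unfold check_dom, hat_dom, Rmax, Rmin.
  split; intros x; destruct (Rle_dec _ _); split; intros; lra.
Qed.

Theorem lemma3p6 (f1 f2 : R -> R) (a1 a2 b1 b2 c1 c2 : R) :
  strongly_hyperbolic f1 -> strongly_hyperbolic f2 ->
  0 < a1 -> 0 < a2 ->
  ((b1 <> b2 /\ c1 = c2) \/ (b1 = b2 /\ c1 <> c2)) ->
  (a1 = a2 ->
     no_root (check_dom b1 b2) (fcheck f1 a1 a2 b1 b2 c1 c2) /\
     no_root (hat_dom b1 b2) (fhat f2 a1 a2 b1 b2 c1 c2)) /\
  (a1 <> a2 ->
     (unique_signchange_root (check_dom b1 b2) (fcheck f1 a1 a2 b1 b2 c1 c2) /\
      no_root (hat_dom b1 b2) (fhat f2 a1 a2 b1 b2 c1 c2)) \/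
     (unique_signchange_root (hat_dom b1 b2) (fhat f2 a1 a2 b1 b2 c1 c2) /\
      no_root (check_dom b1 b2) (fcheck f1 a1 a2 b1 b2 c1 c2))).
Proof.
  intros Hf1 Hf2 Ha1 Ha2 [[Hb Hc]|[Hb Hc]].
  - subst c2. destruct (Rtotal_order b1 b2) as [Hlt|[Heq|Hgt]]; [|contradiction|].
    + destruct (dom_lt b1 b2 Hlt) as [Dc Dh].
      set (d := b2 - b1). assert (Hd : 0 < d) by (unfold d; lra).
      assert (Ec : forall x, check_dom b1 b2 x -> fcheck f1 a1 a2 b1 b2 c1 c1 x =
        (fun u => a1 * f1 u - a2 * f1 (u + d)) (x + b1)).
      { intros x _. unfold fcheck, d. simpl. replace (x + b1 + (b2 - b1)) with (x + b2) by ring. ring. }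
      assert (Eh : forall x, hat_dom b1 b2 x -> fhat f2 a1 a2 b1 b2 c1 c1 x =
        (fun u => a2 * f2 u - a1 * f2 (u + d)) (- x - b2)).
      { intros x _. unfold fhat, d. simpl. replace (- x - b2 + (b2 - b1)) with (- x - b1) by ring. ring. }
      assert (Ec1 : forall x, check_dom b1 b2 x -> fcheck f1 a1 a2 b1 b2 c1 c1 x =
        1 * (fun u => a1 * f1 u - a2 * f1 (u + d)) (x + b1)) by (intros; rewrite Ec; auto; ring).
      assert (Eh1 : forall x, hat_dom b1 b2 x -> fhat f2 a1 a2 b1 b2 c1 c1 x =
        1 * (fun u => a2 * f2 u - a1 * f2 (u + d)) (- x - b2)) by (intros; rewrite Eh; auto; ring).
      split.
      * intros E. split.
        -- eapply NR_comp; [ | | | exact Ec1]; [apply core_K_nr; eauto; lra| lra | intros x Hx; apply Dc; exact Hx].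
        -- eapply NR_comp; [ | | | exact Eh1]; [apply core_K_nr; eauto; lra| lra | intros x Hx; apply Dh; exact Hx].
      * intros Ha. destruct (Rlt_or_le a1 a2) as [H|H]; [left|right]; split.
        -- apply SP_usr. eapply SP_shift; [ | exact Dc | exact Ec]; apply core_K; eauto.
        -- eapply NR_comp; [ | | | exact Eh1]; [apply core_K_nr; eauto; lra| lra | intros x Hx; apply Dh; exact Hx].
        -- apply SP_usr. eapply SP_refl; [ | exact Dh | exact Eh]; apply core_K; eauto; lra.
        -- eapply NR_comp; [ | | | exact Ec1]; [apply core_K_nr; eauto; lra| lra | intros x Hx; apply Dc; exact Hx].
    + destruct (dom_gt b1 b2 Hgt) as [Dc Dh].
      set (d := b1 - b2). assert (Hd : 0 < d) by (unfold d; lra).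
      assert (Ec : forall x, check_dom b1 b2 x -> fcheck f1 a1 a2 b1 b2 c1 c1 x =
        (fun u => - (a2 * f1 u - a1 * f1 (u + d))) (x + b2)).
      { intros x _. unfold fcheck, d. simpl. replace (x + b2 + (b1 - b2)) with (x + b1) by ring. ring. }
      assert (Eh : forall x, hat_dom b1 b2 x -> fhat f2 a1 a2 b1 b2 c1 c1 x =
        (fun u => - (a1 * f2 u - a2 * f2 (u + d))) (- x - b1)).
      { intros x _. unfold fhat, d. simpl. replace (- x - b1 + (b1 - b2)) with (- x - b2) by ring. ring. }
      assert (Ec1 : forall x, check_dom b1 b2 x -> fcheck f1 a1 a2 b1 b2 c1 c1 x =
        (-1) * (fun u => a2 * f1 u - a1 * f1 (u + d)) (x + b2)) by (intros; rewrite Ec; auto; simpl; ring).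
      assert (Eh1 : forall x, hat_dom b1 b2 x -> fhat f2 a1 a2 b1 b2 c1 c1 x =
        (-1) * (fun u => a1 * f2 u - a2 * f2 (u + d)) (- x - b1)) by (intros; rewrite Eh; auto; simpl; ring).
      split.
      * intros E. split.
        -- eapply NR_comp; [ | | | exact Ec1]; [apply core_K_nr; eauto; lra| lra | intros x Hx; apply Dc; exact Hx].
        -- eapply NR_comp; [ | | | exact Eh1]; [apply core_K_nr; eauto; lra| lra | intros x Hx; apply Dh; exact Hx].
      * intros Ha. destruct (Rlt_or_le a2 a1) as [H|H]; [left|right]; split.
        -- apply SP_usr. eapply SP_shift; [ | exact Dc | exact Ec]; apply SP_neg, core_K; eauto.
        -- eapply NR_comp; [ | | | exact Eh1]; [apply core_K_nr; eauto; lra| lra | intros x Hx; apply Dh; exact Hx].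
        -- apply SP_usr. eapply SP_refl; [ | exact Dh | exact Eh]; apply SP_neg, core_K; eauto; lra.
        -- eapply NR_comp; [ | | | exact Ec1]; [apply core_K_nr; eauto; lra| lra | intros x Hx; apply Dc; exact Hx].
  - subst b2. destruct (dom_eq b1) as [Dc Dh].
    assert (Ec : forall x, check_dom b1 b1 x -> fcheck f1 a1 a2 b1 b1 c1 c2 x =
      (fun u => (a1 - a2) * f1 u + (c1 - c2)) (x + b1)).
    { intros x _. unfold fcheck. simpl. ring. }
    assert (Eh : forall x, hat_dom b1 b1 x -> fhat f2 a1 a2 b1 b1 c1 c2 x =
      (fun u => (a2 - a1) * f2 u + (c1 - c2)) (- x - b1)).
    { intros x _. unfold fhat. simpl. ring. }
    assert (Ec1 : forall x, check_dom b1 b1 x -> fcheck f1 a1 a2 b1 b1 c1 c2 x =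
      1 * (fun u => (a1 - a2) * f1 u + (c1 - c2)) (x + b1)) by (intros; rewrite Ec; auto; ring).
    assert (Eh1 : forall x, hat_dom b1 b1 x -> fhat f2 a1 a2 b1 b1 c1 c2 x =
      1 * (fun u => (a2 - a1) * f2 u + (c1 - c2)) (- x - b1)) by (intros; rewrite Eh; auto; ring).
    assert (Hc' : c1 - c2 <> 0) by lra.
    split.
    + intros E. split.
      * eapply NR_comp; [ | | | exact Ec1]; [apply core_L_nr; eauto; nra| lra | intros x Hx; apply Dc; exact Hx].
      * eapply NR_comp; [ | | | exact Eh1]; [apply core_L_nr; eauto; nra| lra | intros x Hx; apply Dh; exact Hx].
    + intros Ha.
      assert (Hp : (a1 - a2) * (c1 - c2) <> 0) by (intro E; apply Rmult_integral in E; destruct E; lra).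
      destruct (Rlt_or_le ((a1 - a2) * (c1 - c2)) 0) as [H|H]; [left|right]; split.
      * apply SP_usr. eapply SP_shift; [ | exact Dc | exact Ec]; apply core_L; eauto.
      * eapply NR_comp; [ | | | exact Eh1]; [apply core_L_nr; eauto; nra| lra | intros x Hx; apply Dh; exact Hx].
      * apply SP_usr. eapply SP_refl; [ | exact Dh | exact Eh]; apply core_L; eauto; nra.
      * eapply NR_comp; [ | | | exact Ec1]; [apply core_L_nr; eauto; nra| lra | intros x Hx; apply Dc; exact Hx].
Qed.
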